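(* Let $X,Y,Z$ be irreducible sofic shifts and $\Phi:X\to Y$, $\Psi:Y\to Z$ factor maps. If $\Psi\circ\Phi:X\to Z$ is right-continuing almost-everywhere with some retract, then $\Psi$ is right-continuing almost-everywhere with some retract.
   Context: Subshifts are closed shift-invariant subsets of $A^{\mathbb Z}$, $A$ finite, with shift $\sigma(x)_i=x_{i+1}$; a factor map is a continuous, shift-commuting, onto map. A point $y\in Y$ is left-transitive in $Y$ if $\{\sigma^i(y): i\le 0\}$ is dense in $Y$. For an integer $n\ge0$, a factor map $f:X\to Y$ is right-continuing almost-everywhere with retract $n$ if for every $x\in X$ and every left-transitive $y\in Y$ with $f(x)_i=y_i$ for all $i\le n$, there exists $x'\in X$ with $x'_i=x_i$ for all $i\le 0$ and $f(x')=y$; ''with some retract'' means this holds for some $n\ge0$. *)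

(* Defs.v *)
From mathcomp Require Import all_boot.
From Stdlib Require Import ZArith List.
Set Implicit Arguments. Unset Strict Implicit. Unset Printing Implicit Defensive.

Definition config (A : Type) := Z -> A.
Definition shiftspace (A : Type) := config A -> Prop.

Definition shiftn (A : Type) (k : Z) (x : config A) : config A :=
  fun i => x (i + k)%Z.
Definition shift (A : Type) (x : config A) : config A := shiftn 1 x.

Definition agree_on (A : Type) (n : Z) (x y : config A) : Prop :=
  forall i : Z, (- n <= i <= n)%Z -> x i = y i.

Fixpoint occurs_at (A : Type) (x : config A) (i : Z) (w : list A) : Prop :=
  match w with
  | nil => True
  | a :: w' => x i = a /\ occurs_at x (i + 1)%Z w'
  end.

(* Closedness in the product topology: every point all of whose central
   windows are approximated by points of X lies in X. *)
Definition closed_set (A : Type) (X : shiftspace A) : Prop :=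
  forall x : config A,
    (forall n : Z, exists y, X y /\ agree_on n x y) -> X x.

Definition shift_invariant (A : Type) (X : shiftspace A) : Prop :=
  forall x : config A, X x <-> X (shift x).

Definition subshift (A : finType) (X : shiftspace A) : Prop :=
  closed_set X /\ shift_invariant X.

Definition in_language (A : Type) (X : shiftspace A) (w : list A) : Prop :=
  exists x, X x /\ exists i, occurs_at x i w.

Definition irreducible (A : Type) (X : shiftspace A) : Prop :=
  forall u v : list A, in_language X u -> in_language X v ->
    exists w, in_language X (u ++ w ++ v).

(* f : X -> Y is a factor map: maps X into Y, continuous on X (product
   topology), commutes with the shift, and is onto Y.  Equalities of points
   are stated pointwise. *)
Definition maps_into (A B : Type) (X : shiftspace A) (Y : shiftspace B)
  (f : config A -> config B) : Prop := forall x, X x -> Y (f x).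

Definition continuous_on (A B : Type) (X : shiftspace A)
  (f : config A -> config B) : Prop :=
  forall x, X x -> forall n : Z, exists m : Z,
    forall x', X x' -> agree_on m x x' -> agree_on n (f x) (f x').

Definition commutes_shift (A B : Type) (X : shiftspace A)
  (f : config A -> config B) : Prop :=
  forall x, X x -> forall i, f (shift x) i = shift (f x) i.

Definition onto (A B : Type) (X : shiftspace A) (Y : shiftspace B)
  (f : config A -> config B) : Prop :=
  forall y, Y y -> exists x, X x /\ forall i, f x i = y i.

Definition factor_map (A B : Type) (X : shiftspace A) (Y : shiftspace B)
  (f : config A -> config B) : Prop :=
  [/\ maps_into X Y f, continuous_on X f, commutes_shift X f & onto X Y f].

Definition SFT (A : finType) (X : shiftspace A) : Prop :=
  exists F : list (list A),
    forall x, X x <-> (forall w, List.In w F -> forall i, ~ occurs_at x i w).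

Definition sofic (A : finType) (X : shiftspace A) : Prop :=
  subshift X /\
  exists (B : finType) (W : shiftspace B) (g : config B -> config A),
    SFT W /\ factor_map W X g.

Definition left_transitive (A : Type) (Y : shiftspace A) (y : config A) : Prop :=
  forall z, Y z -> forall n : Z, exists i : Z, (i <= 0)%Z /\ agree_on n (shiftn i y) z.

Definition rcae_retract (A B : Type) (X : shiftspace A) (Y : shiftspace B)
  (f : config A -> config B) (n : nat) : Prop :=
  forall x, X x -> forall y, Y y -> left_transitive Y y ->
    (forall i : Z, (i <= Z.of_nat n)%Z -> f x i = y i) ->
    exists x', X x' /\ (forall i : Z, (i <= 0)%Z -> x' i = x i) /\
               (forall i : Z, f x' i = y i).

Definition rcae (A B : Type) (X : shiftspace A) (Y : shiftspace B)
  (f : config A -> config B) : Prop := exists n : nat, rcae_retract X Y f n.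

(* Main.v *)
Require Import Defs.
From mathcomp Require Import all_boot.
From Stdlib Require Import ZArith List.
From Stdlib Require Import Classical ClassicalEpsilon FunctionalExtensionality Lia.

Open Scope Z_scope.

Section Compact.
Variables (A : finType) (B : Type) (X : shiftspace A) (f : config A -> config B).

Definition Pm (m : Z) (x x' : config A) :=
  X x /\ X x' /\ agree_on m x x' /\ f x 0 <> f x' 0.

Definition Ext (n : Z) (c : Z -> (A * A)%type) :=
  forall m, exists x x', Pm m x x' /\ agree_on n x (fun i => (c i).1)
                                   /\ agree_on n x' (fun i => (c i).2).

Lemma fin_bound (T : finType) (Q : T -> Z -> Prop) :
  (forall e m m', m <= m' -> Q e m -> Q e m') ->
  (forall e, exists m, Q e m) -> exists M, forall e, Q e M.
Proof.
move=> Hmon Hex.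
have: forall l : seq.seq T, exists M, forall e, e \in l -> Q e M.
  elim=> [|a l [M HM]]; first by exists 0 => e.
  have [ma Ha] := Hex a.
  exists (Z.max M ma) => e; rewrite seq.in_cons => /orP [/eqP ->|He].
  - apply: (Hmon _ ma); [lia|done].
  - apply: (Hmon _ M); [lia|by apply HM].
move/(_ (enum T)) => [M HM]; exists M => e; apply: HM.
by rewrite mem_enum.
Qed.

Lemma Pm_mon m m' x x' : m <= m' -> Pm m' x x' -> Pm m x x'.
Proof. move=> Hm [h1 [h2 [h3 h4]]]; split; [done|split; [done|split; [|done]]].
move=> i Hi; apply h3; lia. Qed.

Lemma ext_step n c : Ext n c -> exists c', Ext (n + 1) c' /\ agree_on n c c'.
Proof.
move=> He.
pose ce (e : ((A * A) * (A * A))%type) := fun i => if Z.eq_dec i (- (n + 1)) then e.1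
   else if Z.eq_dec i (n + 1) then e.2 else c i.
suff [e He'] : exists e, Ext (n + 1) (ce e).
  exists (ce e); split => // i Hi; rewrite /ce.
  case: Z.eq_dec => ?; first lia. case: Z.eq_dec => ?; first lia. done.
apply: NNPP => Hno.
have Hall : forall e, exists m, ~ exists x x', Pm m x x' /\
   agree_on (n+1) x (fun i => (ce e i).1) /\ agree_on (n+1) x' (fun i => (ce e i).2).
  move=> e; apply: NNPP => H1; apply: Hno; exists e => m.
  apply: NNPP => H2; apply: H1; by exists m.
have [M HM] := @fin_bound _ (fun e m => ~ exists x x', Pm m x x' /\
   agree_on (n+1) x (fun i => (ce e i).1) /\ agree_on (n+1) x' (fun i => (ce e i).2))
   ltac:(move=> e m m' Hmm' Hn [x [x' [HP [H1 H2]]]]; apply: Hn; exists x, x';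
         split => //; exact: Pm_mon HP) Hall.
have [x [x' [HP [H1 H2]]]] := He M.
apply: (HM ((x (-(n+1)), x' (-(n+1))), (x (n+1), x' (n+1)))).
exists x, x'; split => //; split => i Hi; rewrite /ce;
  (case: Z.eq_dec => [Heq|?]; [by rewrite /= Heq|];
   case: Z.eq_dec => [Heq|?]; [by rewrite /= Heq|]);
  [apply H1|apply H2]; lia.
Qed.

Lemma unif_cont : closed_set X -> continuous_on X f ->
  exists m : Z, forall x x', X x -> X x' -> agree_on m x x' -> f x 0 = f x' 0.
Proof.
move=> Hcl Hc; apply: NNPP => Hno.
have H : forall m, exists x x', Pm m x x'.
  move=> m; apply: NNPP => H1; apply: Hno; exists m => x x' Hx Hx' Ha.
  apply: NNPP => Hne; apply: H1; exists x, x'; done.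
have [x0 _] := H 0.
pose c0 : Z -> (A * A)%type := fun _ => (x0 0, x0 0).
have Hc0 : Ext (-1) c0.
  move=> m; have [x [x' Hp]] := H m; exists x, x'; split => //; split => i Hi; lia.
have Hg : forall n c, exists c', Ext n c -> Ext (n + 1) c' /\ agree_on n c c'.
  move=> n c; case: (classic (Ext n c)) => Hn.
  - have [c' Hc'] := @ext_step n c Hn; by exists c'.
  - by exists c.
pose g n c := proj1_sig (constructive_indefinite_description _ (Hg n c)).
have gP : forall n c, Ext n c -> Ext (n + 1) (g n c) /\ agree_on n c (g n c).
  move=> n c; exact: (proj2_sig (constructive_indefinite_description _ (Hg n c))).
pose fix cs (k : nat) : Z -> (A * A)%type :=
  match k with O => c0 | S k => g (Z.of_nat k - 1) (cs k) end.
have csE : forall k, Ext (Z.of_nat k - 1) (cs k).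
  elim=> [//|k IH] /=. have := (gP _ _ IH).1.
  by have -> : Z.of_nat k - 1 + 1 = Z.of_nat k.+1 - 1 by lia.
have csC : forall k j, Nat.le k j -> agree_on (Z.of_nat k - 1) (cs k) (cs j).
  move=> k j; elim: j => [|j IH] Hkj.
  - have -> : k = O by lia. by move=> i _.
  - case: (Nat.eq_dec k j.+1) => [->//|Hne].
    move=> i Hi /=. rewrite (IH ltac:(lia)) //.
    apply: (gP _ _ (csE j)).2; lia.
pose w i := (cs (S (Z.to_nat (Z.abs i))) i).1.
pose w' i := (cs (S (Z.to_nat (Z.abs i))) i).2.
have wE : forall k i, Z.abs i <= Z.of_nat k - 1 -> w i = (cs k i).1 /\ w' i = (cs k i).2.
  move=> k i Hi.
  have Hag := csC (S (Z.to_nat (Z.abs i))) k ltac:(lia) i ltac:(lia).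
  by rewrite /w /w' Hag.
have Hww : forall i, w i = w' i.
  move=> i; pose k := (S (Z.to_nat (Z.abs i))).
  have [x [x' [[_ [_ [Ha _]]] [H1 H2]]]] := csE k (Z.of_nat k).
  have [-> ->] := wE k i ltac:(lia).
  rewrite -H1 ?(Ha i) -?H2 //; lia.
have wX : X w.
  apply: Hcl => n; pose k := (S (Z.to_nat (Z.abs n))).
  have [x [x' [[Hx _] [H1 _]]]] := csE k 0.
  exists x; split => // i Hi; have [-> _] := wE k i ltac:(lia); symmetry; apply H1; lia.
have [m0 Hm0] := Hc w wX 0.
pose k := (S (Z.to_nat (Z.abs m0))).
have [x [x' [[Hx [Hx' [_ Hne]]] [H1 H2]]]] := csE k 0.
have e1 := Hm0 x Hx.
have e2 := Hm0 x' Hx'.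
apply: Hne.
have <- : f w 0 = f x 0.
  apply: e1; last lia. move=> i Hi; have [-> _] := wE k i ltac:(lia); symmetry; apply H1; lia.
apply: e2; last lia. move=> i Hi; rewrite Hww; have [_ ->] := wE k i ltac:(lia);
  symmetry; apply H2; lia.
Qed.
End Compact.

Lemma shiftn_inv (A : finType) (X : shiftspace A) :
  shift_invariant X -> forall k x, X x -> X (shiftn k x).
Proof.
move=> Hs.
have P : forall (k : nat) x, X x -> X (shiftn (Z.of_nat k) x) /\ X (shiftn (- Z.of_nat k) x).
  elim=> [|k IH] x Hx.
  - have E1 : shiftn (Z.of_nat 0) x = x by apply: functional_extensionality => i;
       rewrite /shiftn; f_equal; lia.
    have E2 : shiftn (- Z.of_nat 0) x = x by apply: functional_extensionality => i;
       rewrite /shiftn; f_equal; lia.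
    by rewrite ?E1 ?E2; simpl; rewrite ?E1 ?E2.
  - have [H1 H2] := IH x Hx; split.
    + have -> : shiftn (Z.of_nat k.+1) x = Defs.shift (shiftn (Z.of_nat k) x).
        apply: functional_extensionality => i; rewrite /Defs.shift /shiftn; f_equal; lia.
      by apply (proj1 (Hs _)).
    + apply (proj2 (Hs _)).
      have -> : Defs.shift (shiftn (- Z.of_nat k.+1) x) = shiftn (- Z.of_nat k) x.
        apply: functional_extensionality => i; rewrite /Defs.shift /shiftn; f_equal; lia.
      done.
move=> k x Hx; case: (Z_le_gt_dec 0 k) => Hk.
- have := (P (Z.to_nat k) x Hx).1; by rewrite Z2Nat.id.
- have := (P (Z.to_nat (- k)) x Hx).2; rewrite Z2Nat.id; [by rewrite Z.opp_involutive|lia].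
Qed.

Lemma shiftn_comm (A B : finType) (X : shiftspace A) (f : config A -> config B) :
  shift_invariant X -> commutes_shift X f ->
  forall k x, X x -> forall i, f (shiftn k x) i = f x (i + k).
Proof.
move=> Hs Hc.
have P : forall (k : nat) x, X x -> forall i,
   f (shiftn (Z.of_nat k) x) i = f x (i + Z.of_nat k) /\
   f (shiftn (- Z.of_nat k) x) i = f x (i - Z.of_nat k).
  elim=> [|k IH] x Hx i.
  - have E1 : shiftn (Z.of_nat 0) x = x by apply: functional_extensionality => j;
       rewrite /shiftn; f_equal; lia.
    have E2 : shiftn (- Z.of_nat 0) x = x by apply: functional_extensionality => j;
       rewrite /shiftn; f_equal; lia.
    by rewrite ?E1 ?E2; simpl; rewrite ?E1 ?E2; split; f_equal; lia.
  - split.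
    + have -> : shiftn (Z.of_nat k.+1) x = Defs.shift (shiftn (Z.of_nat k) x).
        apply: functional_extensionality => j; rewrite /Defs.shift /shiftn; f_equal; lia.
      rewrite Hc; last exact: shiftn_inv.
      rewrite /Defs.shift /shiftn (IH x Hx (i+1)).1; f_equal; lia.
    + have Hx1 : X (shiftn (- Z.of_nat k.+1) x) by apply: shiftn_inv.
      have := (IH x Hx (i - 1)).2.
      have -> : shiftn (- Z.of_nat k) x = Defs.shift (shiftn (- Z.of_nat k.+1) x).
        apply: functional_extensionality => j; rewrite /Defs.shift /shiftn; f_equal; lia.
      rewrite Hc // /Defs.shift /shiftn (_ : i - 1 + 1 = i); last lia.
      move=> ->; f_equal; lia.
move=> k x Hx i; case: (Z_le_gt_dec 0 k) => Hk.
- have := (P (Z.to_nat k) x Hx i).1; by rewrite Z2Nat.id.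
- have := (P (Z.to_nat (- k)) x Hx i).2; rewrite Z2Nat.id ?Z.opp_involutive; last lia.
  move=> ->; f_equal; lia.
Qed.

Theorem mainTheorem5 (A B C : finType)
  (X : shiftspace A) (Y : shiftspace B) (Z : shiftspace C)
  (Phi : config A -> config B) (Psi : config B -> config C) :
  sofic X -> irreducible X ->
  sofic Y -> irreducible Y ->
  sofic Z -> irreducible Z ->
  factor_map X Y Phi -> factor_map Y Z Psi ->
  rcae X Z (fun x => Psi (Phi x)) ->
  rcae Y Z Psi.
Proof.
move=> [[HXc HXs] _] _ [[HYc HYs] _] _ [[HZc HZs] _] _
  [PhiI PhiC PhiS PhiO] [PsiI PsiC PsiS PsiO] [n Hn].
have [m0 Hm0] := @unif_cont A B X Phi HXc PhiC.
pose a := Z.to_nat m0.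
exists (Nat.add n a) => y Hy z Hz Hzt Hyz.
pose yt := shiftn (Z.of_nat a) y.
pose zt := shiftn (Z.of_nat a) z.
have Hyt : Y yt by apply: shiftn_inv.
have Hzt' : Z zt by apply: shiftn_inv.
have [x [Hx Hxy]] := PhiO yt Hyt.
have Hzlt : Defs.left_transitive Z zt.
  move=> w Hw n'; have [i [Hi Ha]] := Hzt w Hw n'.
  exists (i - Z.of_nat a); split; first lia.
  move=> j Hj; rewrite -Ha // /zt /shiftn; f_equal; lia.
have Hxyeq : Phi x = yt by apply: functional_extensionality.
have [x' [Hx' [Hxx' Hpz]]] := Hn x Hx zt Hzt' Hzlt ltac:(
  move=> i Hi /=; rewrite Hxyeq /yt /zt (@shiftn_comm _ _ Y Psi HYs PsiS) // /shiftn;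
  apply Hyz; lia).
have HPhi : forall j, j <= - Z.of_nat a -> Phi x' j = Phi x j.
  move=> j Hj.
  rewrite -[j]Z.add_0_l -!(@shiftn_comm _ _ X Phi HXs PhiS) //.
  apply: Hm0; try exact: shiftn_inv.
  move=> i Hi; rewrite /shiftn Hxx' //; lia.
exists (shiftn (- Z.of_nat a) (Phi x')); split; first by apply: shiftn_inv; auto.
split.
- move=> i Hi; rewrite /shiftn HPhi; last lia.
  rewrite Hxyeq /yt /shiftn; f_equal; lia.
- move=> i; rewrite (@shiftn_comm _ _ Y Psi HYs PsiS) //; last by auto.
  rewrite Hpz /zt /shiftn; f_equal; lia.
Qed.
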